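(* Let $G$ be a connected graph with $\dim(G)=n(G)-2\ge 2$, and let $\ell\ge 1$ be an integer. Then $D(G)=n(G)-\ell$ if and only if $G$ is isomorphic to one of the following graphs: (a) $K_{\ell+1,\ell+1}$; (b) $K_{t,\ell}$ with $t\ge \ell+1$; (c) $K_\ell+\overline{K_t}$ with $t\ge \ell$; (d) $K_t+\overline{K_\ell}$ with $t\ge \ell\ge 2$; (e) $K_{\ell-1}+(K_t\cup K_1)$ with $t\ge \max\{2,\ell-1\}$; (f) $K_t+(K_{\ell-1}\cup K_1)$ with $t\ge\max\{2,\ell-1\}$.
   Context: All graphs are finite and simple; $n(G)=|V(G)|$. For a connected graph $G$ with shortest-path distance $d_G$, a set $S\subseteq V(G)$ is resolving if for any two distinct vertices $x,y$ there is $s\in S$ with $d_G(x,s)\neq d_G(y,s)$; the metric dimension $\dim(G)$ is the minimum size of a resolving set. A distinguishing coloring of a graph $G$ is a (not necessarily proper) vertex coloring such that the only automorphism of $G$ mapping every vertex to a vertex of the same color is the identity; the distinguishing number $D(G)$ is the minimum number of colors in a distinguishing coloring of $G$. $K_{s,t}$ is the complete bipartite graph, $\overline{K_t}$ the edgeless graph on $t$ vertices, $G\cup H$ the disjoint union, and the join $G+H$ is obtained from $G\cup H$ by adding all edges between $V(G)$ and $V(H)$. *)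

(* Defs.v *)
From mathcomp Require Import all_boot all_fingroup.
Set Implicit Arguments. Unset Strict Implicit. Unset Printing Implicit Defensive.

(* A finite graph: a vertex finType with an adjacency relation.
   Simple graphs: symmetric and irreflexive relations. *)
Record fgraph := FGraph { vert : finType; adj : rel vert }.

Section Graphs.
Variables (T : finType) (e : rel T).

Definition connected_graph : Prop := forall x y : T, connect e x y.

Definition walkn (n : nat) (x y : T) : bool :=
  [exists p : n.-tuple T, path e x p && (last x p == y)].

(* shortest-path distance: least n with a walk of length n from x to y
   (equals #|T| if y is unreachable from x; irrelevant for connected graphs) *)
Definition gdist (x y : T) : nat := find (fun n => walkn n x y) (iota 0 #|T|).

Definition resolving (S : {set T}) : bool :=
  [forall x, forall y, (x != y) ==> [exists s in S, gdist x s != gdist y s]].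

Definition metric_dim : nat :=
  find (fun n => [exists S : {set T}, (#|S| == n) && resolving S]) (iota 0 #|T|.+1).

Definition is_aut (p : {perm T}) : bool :=
  [forall x, forall y, e (p x) (p y) == e x y].

Definition distinguishing (k : nat) (c : {ffun T -> 'I_k}) : bool :=
  [forall p : {perm T}, (is_aut p && [forall x, c (p x) == c x]) ==> (p == 1%g)].

Definition dist_number : nat :=
  find (fun k => [exists c : {ffun T -> 'I_k}, distinguishing c]) (iota 0 #|T|.+1).

Definition isomorphic (G : fgraph) : Prop :=
  exists f : T -> vert G, bijective f /\ forall x y, @adj G (f x) (f y) = e x y.

End Graphs.

Definition Kn (t : nat) : fgraph := @FGraph 'I_t (fun x y => x != y).
Definition Kbar (t : nat) : fgraph := @FGraph 'I_t (fun _ _ => false).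

Definition sum_rel (G H : fgraph) (cross : bool) : rel (vert G + vert H) :=
  fun u v => match u, v with
  | inl x, inl y => @adj G x y
  | inr x, inr y => @adj H x y
  | _, _ => cross
  end.

Definition gunion (G H : fgraph) : fgraph := @FGraph (vert G + vert H)%type (@sum_rel G H false).
Definition gjoin (G H : fgraph) : fgraph := @FGraph (vert G + vert H)%type (@sum_rel G H true).
Definition Kbip (s t : nat) : fgraph := gjoin (Kbar s) (Kbar t).

(* Main.v *)
Require Import Defs.
From mathcomp Require Import all_boot all_fingroup.
From Stdlib Require Import Lia.
From mathcomp Require Import zify.
Set Implicit Arguments. Unset Strict Implicit. Unset Printing Implicit Defensive.

Lemma find_iota_eq (P : pred nat) N k : k < N -> P k ->
  (forall j, j < k -> ~~ P j) -> find P (iota 0 N) = k.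
Proof.
move=> kN Pk Hj.
have hs : has P (iota 0 N) by apply/hasP; exists k => //; rewrite mem_iota.
have fN := hs; rewrite has_find size_iota in fN.
have := nth_find 0 hs; rewrite nth_iota // add0n => Pf.
case: (ltngtP (find P (iota 0 N)) k) => // H.
- by have := Hj _ H; rewrite Pf.
- by have := before_find 0 H; rewrite nth_iota // ?add0n ?Pk // (ltn_trans H).
Qed.

Lemma find_iota_ge (P : pred nat) N k : k <= N ->
  (forall j, j < k -> ~~ P j) -> k <= find P (iota 0 N).
Proof.
move=> kN Hj; rewrite leqNgt; apply/negP => H.
have fN : find P (iota 0 N) < N by apply: leq_trans H kN.
have hs : has P (iota 0 N) by rewrite has_find size_iota.
have := nth_find 0 hs; rewrite nth_iota // add0n => Pf.
by have := Hj _ H; rewrite Pf.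
Qed.

Section Dist.
Variables (T : finType) (e : rel T).
Hypothesis esy : symmetric e.
Hypothesis eirr : irreflexive e.

Lemma walkn0 x y : walkn e 0 x y = (x == y).
Proof.
apply/existsP/idP => [[p /andP[_ /eqP <-]]| /eqP <-].
  by rewrite tuple0.
by exists [tuple]; rewrite /= eqxx.
Qed.

Lemma walkn1 x y : walkn e 1 x y = e x y.
Proof.
apply/existsP/idP => [[p]|H].
  by case: p => [[|a [|b s]]] //= _; rewrite andbT => /andP[H /eqP <-].
by exists [tuple y]; rewrite /= H eqxx.
Qed.

Lemma walkn2 x y : walkn e 2 x y = [exists z, e x z && e z y].
Proof.
apply/existsP/existsP => [[p]|[z /andP[H1 H2]]].
  case: p => [[|a [|b [|c s]]]] //= _; rewrite andbT => /andP[/andP[H1 H2] /eqP E].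
  by exists a; rewrite H1 -E H2.
by exists [tuple z; y]; rewrite /= H1 H2 eqxx.
Qed.

Hypothesis T3 : 3 <= #|T|.

Lemma gdist0 x : gdist e x x = 0.
Proof.
by apply: find_iota_eq => //; [apply: leq_trans T3|rewrite walkn0].
Qed.

Lemma gdist0P x y : (gdist e x y == 0) = (x == y).
Proof.
apply/idP/idP => [/eqP H|/eqP->]; last by rewrite gdist0.
have h : has (fun n => walkn e n x y) (iota 0 #|T|).
  by rewrite has_find size_iota; rewrite /gdist in H; rewrite H; apply: leq_trans T3.
by have := nth_find 0 h; rewrite -/(gdist e x y) H nth_iota ?walkn0 //; apply: leq_trans T3.
Qed.

Lemma gdist1 x y : e x y -> gdist e x y = 1.
Proof.
move=> H; apply: find_iota_eq => //; first by apply: leq_trans T3.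
  by rewrite walkn1.
case=> // _; rewrite walkn0; apply/eqP => E; by rewrite E eirr in H.
Qed.

Lemma gdist2 x y : x != y -> ~~ e x y -> [exists z, e x z && e z y] -> gdist e x y = 2.
Proof.
move=> xy nxy H; apply: find_iota_eq => //; first by rewrite walkn2.
by case=> [|[|]] // _; rewrite ?walkn0 ?walkn1.
Qed.

Lemma gdist3 x y : x != y -> ~~ e x y -> ~~ [exists z, e x z && e z y] -> 3 <= gdist e x y.
Proof.
move=> xy nxy H; apply: find_iota_ge => //.
by case=> [|[|[|]]] // _; rewrite ?walkn0 ?walkn1 ?walkn2.
Qed.

Lemma gdist1P x y : x != y -> (gdist e x y == 1) = e x y.
Proof.
move=> xy; case exy: (e x y); first by rewrite gdist1.
case: (boolP [exists z, e x z && e z y]) => H.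
  by rewrite gdist2 ?exy.
by apply/eqP => E; have := gdist3 xy (negbT exy) H; rewrite E.
Qed.

End Dist.

Definition ag (T : finType) (e : rel T) (p q r : T) :=
  forall v, v != p -> v != q -> v != r -> e p v = e q v.

Lemma path_step (T : eqType) (e : rel T) (P : pred T) x p :
  path e x p -> ~~ P x -> P (last x p) -> exists u v, [/\ e u v, ~~ P u & P v].
Proof.
elim: p x => [|y p IH] x /=; first by move=> _ /negbTE->.
move=> /andP[exy pp] nPx.
case Py: (P y); first by exists x, y; rewrite exy nPx.
by apply: IH => //; rewrite Py.
Qed.

Section Hyps.
Variables (T : finType) (e : rel T).
Hypothesis esy : symmetric e.
Hypothesis eirr : irreflexive e.
Hypothesis econ : connected_graph e.
Hypothesis edim : metric_dim e = #|T| - 2.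
Hypothesis edim2 : 2 <= metric_dim e.

Lemma n4 : 4 <= #|T|.
Proof. by move: edim2; rewrite edim; case: #|T| => [|[|[|[|]]]]. Qed.

Let T3 : 3 <= #|T|. Proof. by apply: leq_trans n4. Qed.

Lemma res_exists : exists S : {set T}, #|S| = #|T| - 2 /\ resolving e S.
Proof.
have h : has (fun n => [exists S : {set T}, (#|S| == n) && resolving e S])
   (iota 0 #|T|.+1).
  by rewrite has_find size_iota -/(metric_dim e) edim ltnS leq_subr.
have := nth_find 0 h; rewrite -/(metric_dim e) nth_iota; last first.
  by rewrite edim ltnS leq_subr.
by rewrite add0n edim => /existsP[S /andP[/eqP H1 H2]]; exists S.
Qed.

Lemma no_res3 (S : {set T}) : #|S| = #|T| - 3 -> ~~ resolving e S.
Proof.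
move=> HS; apply/negP => R.
have lt : #|T| - 3 < metric_dim e by rewrite edim; have := n4; clear; lia.
have := before_find 0 lt; rewrite nth_iota; last first.
  by rewrite ?size_iota; lia.
by rewrite add0n; move/negbT/existsPn/(_ S); rewrite HS eqxx R.
Qed.

Lemma NC : exists x y, x != y /\ ~~ e x y.
Proof.
case: res_exists => S [HS R].
have : #|~: S| == 2.
  by have := cardsC S; rewrite HS; have := n4; clear; move=> ? ?; apply/eqP; lia.
case/cards2P => a [b [ab E]].
suff : [exists x, exists y, (x != y) && ~~ e x y].
  by case/existsP => x /existsP[y /andP[??]]; exists x, y.
case: (boolP [exists x, exists y, (x != y) && ~~ e x y]) => // /existsPn H; exfalso.
move/forallP: R => /(_ a) /forallP /(_ b); rewrite ab /= => /existsP[s /andP[sS]].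
have sa : s != a by apply: contraTneq sS => ->; rewrite -in_setC E !inE eqxx.
have sb : s != b by apply: contraTneq sS => ->; rewrite -in_setC E !inE eqxx orbT.
have ea : e a s.
  by have := H a; move/existsPn/(_ s); rewrite negb_and !negbK eq_sym (negbTE sa).
have eb : e b s.
  by have := H b; move/existsPn/(_ s); rewrite negb_and !negbK eq_sym (negbTE sb).
by rewrite !gdist1.
Qed.

Lemma H3dist a b c : a != b -> b != c -> a != c ->
  exists x y, [/\ x != y, x \in [set a; b; c], y \in [set a; b; c] &
     forall s, s \notin [set a; b; c] -> gdist e x s = gdist e y s].
Proof.
move=> ab bc ac.
have c3 : #|[set a; b; c]| = 3 by rewrite -setUA cardsU1 cards2 bc !inE negb_or ab ac.
have : ~~ resolving e (~: [set a; b; c]).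
  by apply: no_res3; have := cardsC [set a; b; c]; rewrite c3; clear; lia.
move/forallPn => [x /forallPn [y]]; rewrite negb_imply => /andP[xy /existsPn H].
have H' : forall s, s \notin [set a; b; c] -> gdist e x s = gdist e y s.
  by move=> s sn; have := H s; rewrite inE sn /= negbK => /eqP.
exists x, y; split => //.
- apply/negPn/negP => xn; have := H' _ xn; rewrite gdist0 // => /esym/eqP.
  by rewrite gdist0P // eq_sym (negbTE xy).
- apply/negPn/negP => yn; have := H' _ yn; rewrite gdist0 // => /eqP.
  by rewrite gdist0P // (negbTE xy).
Qed.

Lemma agC p q r : ag e p q r -> ag e q p r.
Proof. by move=> H v vp vq vr; rewrite H. Qed.

Lemma H3 a b c : a != b -> b != c -> a != c ->
  [\/ ag e a b c, ag e a c b | ag e b c a].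
Proof.
move=> ab bc ac; case: (H3dist ab bc ac) => x [y [xy xin yin H]].
have G : forall v, v != a -> v != b -> v != c -> e x v = e y v.
  move=> v va vb vc.
  have vx : v != x by apply: contraTneq xin => <-; rewrite !inE !negb_or va vb vc.
  have vy : v != y by apply: contraTneq yin => <-; rewrite !inE !negb_or va vb vc.
  rewrite -(@gdist1P _ _ eirr T3 x v) 1?eq_sym // -(@gdist1P _ _ eirr T3 y v) 1?eq_sym //.
  by rewrite H // !inE !negb_or va vb vc.
move: xin yin xy G; rewrite !inE => /orP[/orP[/eqP->|/eqP->]|/eqP->] /orP[/orP[/eqP->|/eqP->]|/eqP->];
  rewrite ?eqxx // => _ G.
- by apply: Or31 => v va vb vc; apply: G.
- by apply: Or32 => v va vc vb; apply: G.
- by apply: Or31 => v vb va vc; apply: esym; apply: G.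
- by apply: Or33 => v vb vc va; apply: G.
- by apply: Or32 => v vc va vb; apply: esym; apply: G.
- by apply: Or33 => v vc vb va; apply: esym; apply: G.
Qed.


Lemma CN x y : x != y -> ~~ e x y -> exists z, e x z && e z y.
Proof.
move=> xy nxy.
case: (boolP [exists z, e x z && e z y]) => [/existsP//|H]; exfalso.
pose P v := (v != x) && ~~ e v x && ~~ [exists z, e v z && e z x].
have Py : P y.
  rewrite /P eq_sym xy esy nxy /=; apply: contra H => /existsP[z /andP[h1 h2]].
  by apply/existsP; exists z; rewrite esy h2 esy h1.
case/connectP: (econ x y) => p pp ly.
have Px : ~~ P x by rewrite /P eqxx.
have Pl : P (last x p) by rewrite -ly.
have [u [v [euv nPu Pv]]] := path_step pp Px Pl.
move: Pv nPu; rewrite /P => /andP[/andP[vx nvx] nv].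
case: (u =P x) => [E|/eqP ux] /=.
  by rewrite E esy in euv; rewrite euv in nvx.
case eux : (e u x) => /=.
  by case/negP: nv; apply/existsP; exists u; rewrite esy euv.
rewrite negbK => /existsP[z /andP[euz ezx]].
have zu : z != u by apply: contraTneq euz => ->; rewrite eirr.
have uv : u != v by apply: contraTneq euv => ->; rewrite eirr.
have zv : z != v by apply: contraTneq ezx => ->; rewrite (negbTE nvx).
have [a [b [ab ain bin G]]] := H3dist zu uv zv.
have xn : x \notin [set z; u; v].
  rewrite !inE !negb_or (eq_sym x u) ux (eq_sym x v) vx !andbT.
  by apply: contraTneq ezx => <-; rewrite eirr.
have := G _ xn.
have dz : gdist e z x = 1 by rewrite gdist1.
have du : gdist e u x = 2 by rewrite (gdist2 T3) ?eux //; apply/existsP; exists z; rewrite euz.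
have dv : 3 <= gdist e v x by apply: gdist3.
move: ain bin ab; rewrite !inE => /orP[/orP[/eqP->|/eqP->]|/eqP->] /orP[/orP[/eqP->|/eqP->]|/eqP->];
  rewrite ?eqxx // => _; rewrite ?dz ?du => E;
  first [ by [] | by rewrite -E in dv | by rewrite E in dv ].
Qed.

End Hyps.

Section Shapes.
Variables (T : finType) (e : rel T).
Definition R1 (A : {set T}) := forall u v, e u v = ((u \in A) != (v \in A)).
Definition R2 (A : {set T}) := forall u v, e u v = (u != v) && ((u \in A) || (v \in A)).
Definition R3 (A : {set T}) c :=
  forall u v, e u v = (u != v) && [|| u \in A, v \in A | (u != c) && (v != c)].
Definition Bset (A : {set T}) c := [set v | (v \notin A) && (v != c)].
Lemma inB (A : {set T}) c w : (w \in Bset A c) = (w \notin A) && (w != c).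
Proof. by rewrite inE. Qed.
Definition twin x y := forall v, v != x -> v != y -> e x v = e y v.
Definition twinb x y := [forall v, (v != x) ==> (v != y) ==> (e x v == e y v)].
Lemma twinP x y : reflect (twin x y) (twinb x y).
Proof.
apply: (iffP forallP) => [H v vx vy|H v]; first by move/implyP: (H v) => /(_ vx)/implyP/(_ vy)/eqP.
by apply/implyP => vx; apply/implyP => vy; rewrite H.
Qed.
End Shapes.

Section Classif.
Variables (T : finType) (e : rel T).
Hypothesis esy : symmetric e.
Hypothesis eirr : irreflexive e.
Hypothesis NC0 : exists x y, x != y /\ ~~ e x y.
Hypothesis H30 : forall a b c, a != b -> b != c -> a != c ->
  [\/ ag e a b c, ag e a c b | ag e b c a].
Hypothesis CN0 : forall x y, x != y -> ~~ e x y -> exists z, e x z && e z y.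

Lemma neq_e x y : e x y -> x != y.
Proof. by apply: contraTneq => ->; rewrite eirr. Qed.

Ltac ne := first [ assumption | rewrite eq_sym; assumption |
  match goal with
  | H : is_true (e ?x ?y) |- is_true (?x != ?y) => exact: neq_e H
  | H : is_true (e ?y ?x) |- is_true (?x != ?y) => rewrite eq_sym; exact: neq_e H
  | H : e ?x ?y = true |- is_true (?x != ?y) => exact: neq_e H
  | H : e ?y ?x = true |- is_true (?x != ?y) => rewrite eq_sym; exact: neq_e H
  end ].

Ltac ke := repeat (match goal with
  | H : is_true (e ?a ?b) |- context [e ?a ?b] => rewrite H
  | H : is_true (e ?a ?b) |- context [e ?b ?a] => rewrite (esy b a) H
  | H : e ?a ?b = true |- context [e ?a ?b] => rewrite H
  | H : e ?a ?b = true |- context [e ?b ?a] => rewrite (esy b a) H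
  | H : e ?a ?b = false |- context [e ?a ?b] => rewrite H
  | H : e ?a ?b = false |- context [e ?b ?a] => rewrite (esy b a) H
  | H : is_true (~~ e ?a ?b) |- context [e ?a ?b] => rewrite (negbTE H)
  | H : is_true (~~ e ?a ?b) |- context [e ?b ?a] => rewrite (esy b a) (negbTE H)
  end); done.

Ltac app h v := have := h v (ltac:(ne)) (ltac:(ne)) (ltac:(ne)); ke.

Section NoUniv.
Hypothesis NU : forall x, exists w, w != x /\ ~~ e x w.

Lemma aux2 x y w : ~~ e x y -> ~~ e w y -> e x w -> x != y -> y != w ->
  ~~ twinb e x w -> ag e x y w -> False.
Proof.
move=> nxy nwy exw xy yw ntw Hag.
have xw : x != w by ne.
case: (CN0 xy nxy) => m /andP[exm emy].
have mw : m != w by apply: contraTneq emy => ->; rewrite (negbTE nwy).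
have mx : m != x by rewrite eq_sym; ne.
have my : m != y by ne.
case ewm : (e w m).
- have [h|h|h] := H30 xy (ltac:(ne) : y != m) (ltac:(ne) : x != m).
  + app h w.
  + have [h'|h'|h'] := H30 (ltac:(ne) : w != y) (ltac:(ne) : y != m) (ltac:(ne) : w != m).
    * app h' x.
    * case/negP: ntw; apply/twinP => v vx vw.
      case: (v =P y) => [->|/eqP vy]; first by ke.
      case: (v =P m) => [->|/eqP vm]; first by ke.
      by rewrite h // h'.
    * app h' x.
  + app h w.
- have wy : w != y by ne.
  case: (CN0 wy nwy) => p /andP[ewp epy].
  have px : p != x by apply: contraTneq epy => ->; rewrite (negbTE nxy).
  have pm : p != m by apply: contraTneq ewp => ->; rewrite ewm.
  have pw : p != w by rewrite eq_sym; ne.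
  have py : p != y by ne.
  have exp : e x p by rewrite Hag // esy.
  have [h'|h'|h'] := H30 wy (ltac:(ne) : y != m) (ltac:(ne) : w != m).
  + app h' x.
  + have emp : e m p by rewrite -h' // esy.
    have [h|h|h] := H30 pw wy py.
    * app h m.
    * app h x.
    * app h x.
  + app h' x.
Qed.

Lemma aux1 x y w : x != y -> ~~ e x y -> w != x -> w != y -> e x w -> ~~ e y w -> False.
Proof.
move=> xy nxy wx wy exw nyw.
case: (boolP (twinb e x w)) => [/twinP tw|ntw].
- case: (CN0 xy nxy) => m /andP[exm emy].
  have mw : m != w by apply: contraTneq emy => ->; rewrite esy (negbTE nyw).
  have mx : m != x by rewrite eq_sym; ne.
  have my : m != y by ne.
  have ewm : e w m by rewrite -tw.
  have [h|h|h] := H30 xy (ltac:(ne) : y != m) (ltac:(ne) : x != m).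
  + app h w.
  + case: (NU m) => p [pm nmp].
    have py : p != y by apply: contraTneq nmp => ->; rewrite emy.
    have px : p != x by apply: contraTneq nmp => ->; rewrite esy exm.
    have pw : p != w by apply: contraTneq nmp => ->; rewrite esy ewm.
    have nxp : ~~ e x p by rewrite h.
    have [h'|h'|h'] := H30 xy (ltac:(ne) : y != p) (ltac:(ne) : x != p).
    * app h' w.
    * app h' m.
    * app h' m.
  + app h w.
- have yw : y != w by ne.
  have xw : x != w by ne.
  have [h|h|h] := H30 xy yw xw.
  + by apply: (aux2 nxy (_ : ~~ e w y) exw xy yw ntw h); rewrite esy.
  + case/negP: ntw; apply/twinP => v vx vw.
    case: (v =P y) => [->|/eqP vy]; first by ke.
    by rewrite h.
  + have ntw' : ~~ twinb e w x.
      by apply: contra ntw => /twinP tw; apply/twinP => v v1 v2; rewrite tw.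
    have nwy : ~~ e w y by rewrite esy.
    have ewx : e w x by rewrite esy.
    exact: (aux2 nwy nxy ewx (ltac:(ne) : w != y) (ltac:(ne) : y != x) ntw' (agC h)).
Qed.

Lemma NT x y : x != y -> ~~ e x y -> twin e x y.
Proof.
move=> xy nxy; apply/twinP; apply/negPn/negP => /forallPn[w].
rewrite !negb_imply => /and3P[wx wy ne'].
case exw : (e x w).
- by apply: (aux1 xy nxy wx wy exw); move: ne'; rewrite exw; case: (e y w).
- have eyw : e y w by move: ne'; rewrite exw; case: (e y w).
  have nyx : ~~ e y x by rewrite esy.
  by apply: (aux1 (ltac:(ne) : y != x) nyx wy wx eyw); rewrite exw.
Qed.

Lemma TF x v v' : e x v -> e x v' -> e v v' -> False.
Proof.
move=> exv exv' evv'.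
case: (NU x) => x' [x'x nxx'].
have tx := NT (ltac:(ne) : x != x') nxx'.
have x'v : x' != v by apply: contraTneq nxx' => ->; rewrite exv.
have x'v' : x' != v' by apply: contraTneq nxx' => ->; rewrite exv'.
have ex'v : e x' v by rewrite -tx //; ne.
have ex'v' : e x' v' by rewrite -tx //; ne.
case: (NU v) => v'' [v''v nvv''].
have v''x : v'' != x by apply: contraTneq nvv'' => ->; rewrite esy exv.
have v''v' : v'' != v' by apply: contraTneq nvv'' => ->; rewrite evv'.
have tv := NT (ltac:(ne) : v != v'') nvv''.
have ev''v' : e v'' v' by rewrite -tv //; ne.
have [h|h|h] := H30 (ltac:(ne) : x != v) (ltac:(ne) : v != v') (ltac:(ne) : x != v').
- app h x'.
- app h x'.
- app h v''.
Qed.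

Lemma classR1 : exists A, R1 e A /\ 0 < #|A| /\ 0 < #|~: A|.
Proof.
case: NC0 => x0 [y0 [xy nxy]].
exists [set v | ~~ e x0 v]; split; last split.
- move=> u v; rewrite !inE.
  case: (u =P v) => [->|/eqP uv]; first by rewrite eirr ?eqxx.
  case: (u =P x0) => [->|/eqP ux]; first by rewrite eirr; case: (e x0 v).
  case: (v =P x0) => [->|/eqP vx]; first by rewrite eirr esy; case: (e x0 u).
  case ex0u : (e x0 u); case ex0v : (e x0 v) => /=.
  + by have := TF ex0u ex0v; case: (e u v) => // /(_ isT).
  + have tw := NT (ltac:(ne) : x0 != v) (negbT ex0v).
    by rewrite esy -tw ?ex0u //; ne.
  + have tw := NT (ltac:(ne) : x0 != u) (negbT ex0u).
    by rewrite -tw ?ex0v //; ne.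
  + have tw := NT (ltac:(ne) : x0 != u) (negbT ex0u).
    by rewrite -tw ?ex0v //; ne.
- by apply/card_gt0P; exists x0; rewrite inE eirr.
- case: (CN0 xy nxy) => z /andP[ez _].
  by apply/card_gt0P; exists z; rewrite !inE ez.
Qed.

End NoUniv.
Section Univ.
Variable u0 : T.
Hypothesis u0U : forall v, v != u0 -> e u0 v.

Let A := [set x | [forall v, (v != x) ==> e x v]].

Lemma inAP x : reflect (forall v, v != x -> e x v) (x \in A).
Proof.
rewrite inE; apply: (iffP forallP) => H v; first by move=> vx; move/implyP: (H v); apply.
by apply/implyP; apply: H.
Qed.

Lemma notA x : x \notin A -> exists w, w != x /\ ~~ e x w.
Proof.
move=> xA.
have : ~~ [forall v, (v != x) ==> e x v] by move: xA; rewrite inE.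
by case/forallPn => w; rewrite negb_imply => /andP[? ?]; exists w.
Qed.

Lemma u0A : u0 \in A. Proof. by apply/inAP. Qed.

Lemma K1 y z : y \notin A -> z \notin A -> e y z -> twin e y z.
Proof.
move=> yA zA eyz.
have uy : u0 != y by apply: contraNneq yA => <-; exact: u0A.
have uz : u0 != z by apply: contraNneq zA => <-; exact: u0A.
have euy : e u0 y by apply: u0U; rewrite eq_sym.
have euz : e u0 z by apply: u0U; rewrite eq_sym.
have [h|h|h] := H30 uy (ltac:(ne) : y != z) uz.
- case: (notA yA) => w [wy nyw].
  have wz : w != z by apply: contraTneq eyz => <-; rewrite (negbTE nyw).
  have wu : w != u0 by apply: contraTneq nyw => ->; rewrite esy euy.
  by have := h w wu wy wz; rewrite u0U // (negbTE nyw).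
- case: (notA zA) => w [wz nzw].
  have wy : w != y by apply: contraTneq eyz => <-; rewrite esy (negbTE nzw).
  have wu : w != u0 by apply: contraTneq nzw => ->; rewrite esy euz.
  by have := h w wu wz wy; rewrite u0U // (negbTE nzw).
- move=> v vy vz; case: (v =P u0) => [->|/eqP vu]; first by rewrite !(esy _ u0) euy euz.
  exact: h.
Qed.

Lemma classUniv : (exists A : {set T}, R2 e A /\ 2 <= #|~: A|) \/
   (exists (A : {set T}) (c : T), [/\ c \notin A, R3 e A c & 2 <= #|Bset A c|]).
Proof.
have uA x v : x \in A -> v != x -> e x v by move=> /inAP; apply.
have Aadj x y : x != y -> ~~ e x y -> x \notin A.
  by move=> xy nxy; apply/negP => /inAP/(_ y); rewrite eq_sym xy (negbTE nxy) => /(_ isT).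
case: (boolP [exists y, exists z, [&& y \notin A, z \notin A & e y z]]) => [|H].
- case/existsP => y /existsP[z /and3P[yA zA eyz]].
  case: (notA yA) => c [cy nyc].
  have tyz := K1 yA zA eyz.
  have cz : c != z by apply: contraTneq eyz => <-; rewrite (negbTE nyc).
  have ezc : ~~ e z c by rewrite -tyz //.
  have cA : c \notin A by apply: (Aadj c y); rewrite // esy.
  have uy : u0 != y by apply: contraNneq yA => <-; exact: u0A.
  have uc : u0 != c by apply: contraNneq cA => <-; exact: u0A.
  have F1 : forall w, w != y -> w != c -> e y w.
    have [h|h|h] := H30 uy (ltac:(ne) : y != c) uc.
    + move=> w wy wc; case: (w =P u0) => [->|/eqP wu]; first by rewrite esy u0U // eq_sym.
      by rewrite -h // u0U.
    + have zu : z != u0 by apply: contraNneq zA => ->; exact: u0A.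
      by have := h z zu (ltac:(ne)) (ltac:(ne)); rewrite u0U // esy (negbTE ezc).
    + have zu : z != u0 by apply: contraNneq zA => ->; exact: u0A.
      by have := h z (ltac:(ne)) (ltac:(ne)) zu; rewrite eyz esy (negbTE ezc).
  have F2 : forall w, w \notin A -> w != c -> w != y -> twin e y w.
    by move=> w wA wc wy; apply: K1 => //; apply: F1.
  have F3 : forall w1 w2, w1 \notin A -> w2 \notin A -> w1 != c -> w2 != c -> w1 != w2 -> e w1 w2.
    move=> w1 w2 A1 A2 c1 c2 w12.
    case: (w1 =P y) => [E|/eqP w1y].
      by subst w1; apply: F1 => //; rewrite eq_sym.
    case: (w2 =P y) => [E|/eqP w2y].
      by subst w2; rewrite esy; apply: F1.
    rewrite -(F2 w1) //; first by apply: F1.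
    by rewrite eq_sym.
  have F4 : forall w, w \notin A -> w != c -> ~~ e w c.
    move=> w wA wc; case: (w =P y) => [->|/eqP wy]; first by [].
    by rewrite -(F2 w) // eq_sym.
  right; exists A, c; split => //.
  + move=> a b; case: (a =P b) => [<-|/eqP ab]; first by rewrite eirr ?eqxx.
    rewrite /=.
    case aA : (a \in A); first by rewrite uA // eq_sym.
    case bA : (b \in A); first by rewrite esy uA.
    case: (a =P c) => [E|/eqP ac] /=.
      by subst a; rewrite esy; apply/negbTE; apply: F4; rewrite ?bA // eq_sym.
    case: (b =P c) => [E|/eqP bc] /=.
      by subst b; apply/negbTE; apply: F4; rewrite ?aA.
    by apply: F3; rewrite ?aA ?bA.
  + have : [set y; z] \subset Bset A c.
      apply/subsetP => w; rewrite inB in_set2 => /orP[]/eqP->; rewrite ?yA ?zA /= eq_sym ?cy ?cz //.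
    by move/subset_leq_card; rewrite cards2 (ltac:(ne) : y != z).
- left; exists A; split.
  + move=> a b; case: (a =P b) => [<-|/eqP ab]; first by rewrite eirr ?eqxx.
    rewrite /=.
    case aA : (a \in A); first by rewrite uA // eq_sym.
    case bA : (b \in A); first by rewrite esy uA.
    apply/negbTE; apply: contra H => eab; apply/existsP; exists a; apply/existsP; exists b.
    by rewrite aA bA eab.
  + case: NC0 => x [y [xy nxy]].
    have : [set x; y] \subset ~: A.
      apply/subsetP => w; rewrite in_set2 in_setC => /orP[]/eqP->.
        exact: (Aadj x y).
      by apply: (Aadj y x); [rewrite eq_sym | rewrite esy].
    by move/subset_leq_card; rewrite cards2 xy.
Qed.

End Univ.

Lemma classif : (exists A, [/\ R1 e A, 0 < #|A| & 0 < #|~: A|]) \/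
   (exists A, R2 e A /\ 2 <= #|~: A|) \/
   (exists (A : {set T}) (c : T), [/\ c \notin A, R3 e A c & 2 <= #|Bset A c|]).
Proof.
case: (boolP [exists u, [forall v, (v != u) ==> e u v]]) => [/existsP[u /forallP H]|H].
- right; apply: (@classUniv u) => v vu; by move/implyP: (H v); apply.
- left; have NU : forall x, exists w, w != x /\ ~~ e x w.
    move=> x; move/existsPn/(_ x)/forallPn: H => [w]; rewrite negb_imply => /andP[? ?].
    by exists w.
  by case: (classR1 NU) => A [? [? ?]]; exists A.
Qed.

End Classif.

Section Idx.
Variable T : finType.
Definition idx (A : {set T}) v := index v (enum A).
Lemma idx_lt (A : {set T}) v : v \in A -> idx A v < #|A|.
Proof. by move=> vA; rewrite /idx cardE index_mem mem_enum. Qed.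
Lemma idx_inj (A : {set T}) u v : u \in A -> v \in A -> idx A u = idx A v -> u = v.
Proof.
move=> uA vA E.
by rewrite -(nth_index u (_ : u \in enum A)) ?mem_enum // -/(idx A u) E /idx nth_index ?mem_enum.
Qed.
Lemma idx_nth (A : {set T}) x0 i : i < #|A| -> idx A (nth x0 (enum A) i) = i.
Proof. by move=> iA; rewrite /idx index_uniq ?enum_uniq // -cardE. Qed.
Lemma nth_in (A : {set T}) x0 i : i < #|A| -> nth x0 (enum A) i \in A.
Proof. by move=> iA; rewrite -mem_enum mem_nth // -cardE. Qed.
End Idx.

Section Dist.
Variables (T : finType) (e : rel T).
Hypothesis esy : symmetric e.
Hypothesis eirr : irreflexive e.

Definition Pk k := [exists c : {ffun T -> 'I_k}, distinguishing e c].

Lemma D_eq k : Pk k -> (forall j, j < k -> ~~ Pk j) -> k <= #|T| -> dist_number e = k.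
Proof. by move=> Pk' Hj kn; apply: find_iota_eq. Qed.

Lemma aut_adj (p : {perm T}) : is_aut e p -> forall x y, e (p x) (p y) = e x y.
Proof. by move=> /forallP H x y; move/forallP/(_ y)/eqP: (H x). Qed.

Lemma twin_aut x y : twin e x y -> is_aut e (tperm x y).
Proof.
move=> tw; apply/forallP => u; apply/forallP => v; apply/eqP.
have tw' : forall w, w != x -> w != y -> e y w = e x w by move=> w ? ?; rewrite tw.
case: (x =P y) => [->|/eqP xy]; first by rewrite tperm1 !perm1.
case: tpermP => [->|->|/eqP ux /eqP uy]; case: tpermP => [->|->|/eqP vx /eqP vy] //;
  rewrite ?eirr ?(esy y x) //.
- by rewrite tw'.
- by rewrite tw.
- by rewrite (esy u y) (esy u x) tw'.
- by rewrite (esy u y) (esy u x) tw.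
Qed.

Lemma dist_twin_inj k (c : {ffun T -> 'I_k}) x y :
  distinguishing e c -> twin e x y -> c x = c y -> x = y.
Proof.
move=> /forallP/(_ (tperm x y)) D tw cxy; apply/eqP/negPn/negP => xy.
have : tperm x y == 1%g.
  apply: (implyP D); rewrite twin_aut //=; apply/forallP => v.
  by case: tpermP => [->|->|] //; rewrite cxy.
by move/eqP/permP/(_ x); rewrite tpermL perm1 => E; rewrite E eqxx in xy.
Qed.

Lemma LBtw (X : {set T}) k : (forall x y, x \in X -> y \in X -> twin e x y) ->
  k < #|X| -> ~~ Pk k.
Proof.
move=> tw kX; apply/existsP => [[c D]].
have inj : {in X &, injective c} by move=> x y xX yX; apply: dist_twin_inj D (tw _ _ xX yX).
have := card_in_imset inj; move: (max_card (c @: X)); rewrite card_ord => le E.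
by rewrite E in le; rewrite ltnNge le in kX.
Qed.

Lemma UB k (f : T -> nat) (cl : T -> nat) : (forall v, f v < k) ->
  (forall p : {perm T}, is_aut e p -> (forall x, f (p x) = f x) -> forall x, cl (p x) = cl x) ->
  (forall u v, cl u = cl v -> f u = f v -> u = v) -> Pk k.
Proof.
move=> fk Hcl Hinj; apply/existsP; exists [ffun v => Ordinal (fk v)].
apply/forallP => p; apply/implyP => /andP[ap /forallP H].
have fp : forall x, f (p x) = f x by move=> x; move/eqP: (H x); rewrite !ffunE => -[].
apply/eqP/permP => x; rewrite perm1; apply: Hinj; [exact: Hcl | exact: fp].
Qed.

Definition univ x := [forall v, (v != x) ==> e x v].

Lemma aut_univ (p : {perm T}) x : is_aut e p -> univ (p x) = univ x.
Proof.
move=> ap; have E := aut_adj ap; apply/forallP/forallP => H v; apply/implyP => vx.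
- rewrite -E; move/implyP: (H (p v)); apply; by rewrite (inj_eq (@perm_inj _ p)).
- have ne' : (p^-1)%g v != x by rewrite -(inj_eq (@perm_inj _ p)) permKV.
  by rewrite -[v](permKV p) E; apply: (implyP (H _)).
Qed.

End Dist.

Section DR2.
Variables (T : finType) (e : rel T).
Hypothesis esy : symmetric e.
Hypothesis eirr : irreflexive e.

Lemma card2_other (X : {set T}) x : 2 <= #|X| -> exists2 y, y \in X & y != x.
Proof.
move=> X2; have : 0 < #|X :\ x|.
  by have := cardsD1 x X; case: (x \in X) => /=; lia.
case/card_gt0P => y; rewrite !inE => /andP[yx yX]; by exists y.
Qed.

Section R2.
Variable A : {set T}.
Hypothesis HA : R2 e A.
Hypothesis b2 : 2 <= #|~: A|.

Lemma univ_R2 x : univ e x = (x \in A).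
Proof.
case xA : (x \in A).
- by apply/forallP => v; apply/implyP => vx; rewrite HA xA eq_sym vx.
- apply/negbTE/forallPn; case: (card2_other x b2) => y; rewrite inE => yA yx.
  by exists y; rewrite yx HA xA (negbTE yA) andbF.
Qed.

Lemma D_R2 : dist_number e = maxn #|A| #|~: A|.
Proof.
apply: D_eq.
- pose f v := if v \in A then idx A v else idx (~: A) v.
  apply: (@UB _ _ _ f (fun v => v \in A : nat)).
  + move=> v; rewrite /f; case: ifP => vA.
      by apply: leq_trans (idx_lt vA) (leq_maxl _ _).
    by apply: leq_trans (idx_lt (_ : v \in ~: A)) (leq_maxr _ _); rewrite inE vA.
  + by move=> p ap _ x; rewrite -!univ_R2 aut_univ.
  + move=> u v; rewrite /f; case uA : (u \in A); case vA : (v \in A) => // _.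
      exact: idx_inj.
    by apply: idx_inj; rewrite inE ?uA ?vA.
- move=> j; rewrite leq_max => /orP[] jlt; apply: (LBtw esy eirr _ jlt).
  + move=> x y xA yA v vx vy; by rewrite !HA xA yA (eq_sym x) vx (eq_sym y) vy.
  + move=> x y; rewrite !inE => xA yA v vx vy.
    by rewrite !HA (negbTE xA) (negbTE yA) (eq_sym x) vx (eq_sym y) vy.
- by rewrite geq_max -(cardsC A) leq_addr leq_addl.
Qed.
End R2.

Section R3.
Variable A : {set T}.
Variable c : T.
Hypothesis cA : c \notin A.
Hypothesis HA : R3 e A c.
Hypothesis b2 : 2 <= #|Bset A c|.

Lemma univ_R3 x : univ e x = (x \in A).
Proof.
case xA : (x \in A).
- by apply/forallP => v; apply/implyP => vx; rewrite HA xA eq_sym vx.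
- apply/negbTE/forallPn.
  case: (x =P c) => [->|/eqP xc].
  + case: (card2_other c b2) => y; rewrite inB => /andP[yA yc] _.
    by exists y; rewrite yc HA (negbTE cA) (negbTE yA) eqxx /= andbF.
  + by exists c; rewrite eq_sym xc HA xA (negbTE cA) eqxx xc andbF.
Qed.

Lemma D_R3 : dist_number e = maxn #|A| #|Bset A c|.
Proof.
apply: D_eq.
- pose f v := if v \in A then idx A v else if v == c then 0 else idx (Bset A c) v.
  pose cl v := if v \in A then 0 else if v == c then 1 else 2.
  apply: (@UB _ _ _ f cl).
  + move=> v; rewrite /f; case: ifP => vA.
      by apply: leq_trans (idx_lt vA) (leq_maxl _ _).
    case: ifP => vc; first by apply: leq_trans (ltnW b2) (leq_maxr _ _).
    by apply: leq_trans (idx_lt (_ : v \in Bset A c)) (leq_maxr _ _); rewrite inB vA vc.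
  + move=> p ap _.
    have pA x : (p x \in A) = (x \in A) by rewrite -!univ_R3 aut_univ.
    have pc : p c = c.
      apply/eqP/negPn/negP => pcc.
      case: (card2_other (p c) b2) => w; rewrite inB => /andP[wA wc] wpc.
      have : e (p c) w by rewrite HA eq_sym wpc pA (negbTE cA) (negbTE wA) wc pcc.
      rewrite -[w](permKV p) (aut_adj ap) HA (negbTE cA) eqxx /= orbF => /andP[_].
      by rewrite -pA permKV (negbTE wA).
    move=> x; rewrite /cl pA; case: ifP => // _.
    case: (x =P c) => [->|/eqP xc]; first by rewrite pc eqxx.
    by rewrite -pc (inj_eq (@perm_inj _ p)) (negbTE xc).
  + move=> u v; rewrite /cl /f.
    case uA : (u \in A); case vA : (v \in A); case: (u =P c) => [Eu|/eqP uc];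
      case: (v =P c) => [Ev|/eqP vc] //=; try (by rewrite Eu Ev);
      try (by move=> _ /idx_inj; apply); by move=> _ /idx_inj; apply; rewrite inB ?uA ?vA ?uc ?vc.
- move=> j; rewrite leq_max => /orP[] jlt; apply: (LBtw esy eirr _ jlt).
  + move=> x y xA yA v vx vy; by rewrite !HA xA yA (eq_sym x) vx (eq_sym y) vy.
  + move=> x y; rewrite !inB => /andP[xA xc] /andP[yA yc] v vx vy.
    by rewrite !HA (negbTE xA) (negbTE yA) (eq_sym x) vx (eq_sym y) vy xc yc.
- have : Bset A c \subset ~: A by apply/subsetP => v; rewrite inB inE => /andP[].
  move/subset_leq_card => le.
  by rewrite geq_max -(cardsC A) leq_addr (leq_trans le) // leq_addl.
Qed.
End R3.
End DR2.

Section DR1.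
Variables (T : finType) (e : rel T).
Hypothesis esy : symmetric e.
Hypothesis eirr : irreflexive e.

Lemma R1C A : R1 e A -> R1 e (~: A).
Proof. by move=> H u v; rewrite H !inE; case: (u \in A); case: (v \in A). Qed.

Section R1.
Variable A : {set T}.
Hypothesis HA : R1 e A.
Hypothesis a0 : 0 < #|A|.

Lemma twR1 x y : (x \in A) = (y \in A) -> twin e x y.
Proof. by move=> E v _ _; rewrite !HA E. Qed.

Lemma fixR1 (p : {perm T}) y : is_aut e p -> p y = y -> forall x, (p x \in A) = (x \in A).
Proof.
move=> ap py x; have := aut_adj ap y x; rewrite py !HA.
by case: (y \in A); case: (p x \in A); case: (x \in A).
Qed.

Lemma D_R1lt : #|A| < #|~: A| -> dist_number e = #|~: A|.
Proof.
move=> ab; case/card_gt0P: a0 => x0 _.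
apply: D_eq.
- pose f v := if v \in A then idx A v else idx (~: A) v.
  apply: (@UB _ _ _ f (fun v => v \in A : nat)).
  + move=> v; rewrite /f; case: ifP => vA; first by apply: leq_trans (idx_lt vA) (ltnW ab).
    by apply: idx_lt; rewrite inE vA.
  + move=> p ap fp.
    pose y := nth x0 (enum (~: A)) (#|~: A|.-1).
    have yB : y \in ~: A by apply: nth_in; rewrite prednK //; apply: leq_trans ab.
    have fy : f y = #|~: A|.-1.
      by rewrite /f; move: (yB); rewrite inE => /negbTE ->; rewrite idx_nth // prednK //;
        apply: leq_trans ab.
    have py : p y = y.
      have := fp y; rewrite fy /f; case: ifP => pyA.
        by move=> E; have := idx_lt pyA; rewrite E; move: ab; clear; lia.
      move=> E; apply: (idx_inj (_ : p y \in ~: A) yB); first by rewrite inE pyA.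
      by rewrite E -fy /f; move: (yB); rewrite inE => /negbTE ->.
    by move=> x; rewrite (fixR1 ap py).
  + move=> u v; rewrite /f; case uA : (u \in A); case vA : (v \in A) => //= _.
      by move/idx_inj; apply.
    by move/idx_inj; apply; rewrite inE ?uA ?vA.
- move=> j jlt; apply: (LBtw esy eirr _ jlt) => x y; rewrite !inE => xA yA.
  by apply: twR1; rewrite (negbTE xA) (negbTE yA).
- by rewrite -(cardsC A) leq_addl.
Qed.

Lemma LB_swap : #|A| = #|~: A| -> ~~ Pk e #|A|.
Proof.
move=> ab; apply/existsP => -[c D].
have injX (X : {set T}) : (forall x y, x \in X -> y \in X -> (x \in A) = (y \in A)) ->
   {in X &, injective c}.
  by move=> HX x y xX yX; apply: (dist_twin_inj esy eirr D); apply: twR1; apply: HX.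
have surjX (X : {set T}) : #|X| = #|A| -> {in X &, injective c} ->
   forall i, exists2 w, w \in X & c w = i.
  move=> cX inj i; have E : c @: X = [set: 'I_#|A|].
    by apply/eqP; rewrite eqEcard subsetT cardsT card_ord card_in_imset // cX leqnn.
  have : i \in c @: X by rewrite E inE.
  by case/imsetP => w wX ->; exists w.
have injA : {in A &, injective c} by apply: injX => x y ->.
have injB : {in ~: A &, injective c}.
  by apply: injX => x y; rewrite !inE => /negbTE-> /negbTE->.
pose g v := odflt v [pick w | ((w \in A) != (v \in A)) && (c w == c v)].
have gP v : ((g v \in A) != (v \in A)) && (c (g v) == c v).
  rewrite /g; case: pickP => [w -> //|none].
  case vA : (v \in A).
  - case: (surjX (~: A) (esym ab) injB (c v)) => w; rewrite inE => wA cw.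
    by have := none w; rewrite (negbTE wA) vA cw eqxx.
  - case: (surjX A erefl injA (c v)) => w wA cw.
    by have := none w; rewrite wA vA cw eqxx.
have gA v : (g v \in A) = ~~ (v \in A).
  by case/andP: (gP v); case: (g v \in A); case: (v \in A).
have gc v : c (g v) = c v by case/andP: (gP v) => _ /eqP.
have gK : cancel g g.
  move=> v; case vA : (v \in A).
  - apply: injA; rewrite ?gA ?vA ?negbK //; by rewrite !gc.
  - apply: injB; rewrite ?inE ?gA ?vA ?negbK //; by rewrite !gc.
pose pi := perm (can_inj gK).
move/forallP/(_ pi): D.
have -> : is_aut e pi.
  by apply/forallP => x; apply/forallP => y; rewrite !permE !HA !gA; case: (x \in A); case: (y \in A).
have -> : [forall x, c (pi x) == c x] by apply/forallP => x; rewrite permE gc.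
move=> /eqP/permP; case/card_gt0P: a0 => x xA /(_ x); rewrite permE perm1 => E.
by have := gA x; rewrite E xA.
Qed.

Lemma D_R1eq : #|A| = #|~: A| -> dist_number e = #|A|.+1.
Proof.
move=> ab; case/card_gt0P: a0 => x0 _.
apply: D_eq.
- pose f v := if v \in A then idx A v else (idx (~: A) v).+1.
  apply: (@UB _ _ _ f (fun v => v \in A : nat)).
  + move=> v; rewrite /f; case: ifP => vA; first by apply: leq_trans (idx_lt vA) _.
    by rewrite ltnS ab; apply: idx_lt; rewrite inE vA.
  + move=> p ap fp.
    pose y := nth x0 (enum A) 0.
    have yA : y \in A by apply: nth_in.
    have fy : f y = 0 by rewrite /f yA idx_nth.
    have py : p y = y.
      have := fp y; rewrite fy /f; case: ifP => pyA // E.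
      by apply: (idx_inj pyA yA); rewrite E -fy /f yA.
    by move=> x; rewrite (fixR1 ap py).
  + move=> u v; rewrite /f; case uA : (u \in A); case vA : (v \in A) => //= _.
      by move/idx_inj; apply.
    by case; move/idx_inj; apply; rewrite inE ?uA ?vA.
- move=> j; rewrite ltnS leq_eqVlt => /orP[/eqP->|jlt]; first exact: LB_swap.
  apply: (LBtw esy eirr _ jlt) => x y xA yA.
  by apply: twR1; rewrite xA yA.
- by rewrite -(cardsC A) -ab; move: a0; clear; lia.
Qed.

End R1.

Lemma D_R1 A : R1 e A -> 0 < #|A| -> 0 < #|~: A| ->
  dist_number e = if #|A| == #|~: A| then #|A|.+1 else maxn #|A| #|~: A|.
Proof.
move=> HA a0 b0; case: ltngtP => ab.
- by rewrite ?(maxn_idPr (ltnW ab)); apply: D_R1lt.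
- rewrite ?(maxn_idPl (ltnW ab)); have := D_R1lt (R1C HA) b0; rewrite setCK; apply.
  by rewrite ab.
- exact: D_R1eq.
Qed.

End DR1.

Section Iso.
Variables (T : finType) (e : rel T).
Hypothesis esy : symmetric e.
Hypothesis eirr : irreflexive e.

Lemma iso_of (G : Defs.fgraph) (g : vert G -> T) : injective g -> #|vert G| = #|T| ->
  (forall u v, e (g u) (g v) = adj u v) -> isomorphic e G.
Proof.
move=> ig cG H.
have [f gf fg] : bijective g by apply: inj_card_bij; rewrite // cG.
exists f; split; first by exists g.
by move=> x y; rewrite -H !fg.
Qed.

Lemma nthE (X : {set T}) x0 i j : i < #|X| -> j < #|X| ->
  (nth x0 (enum X) i == nth x0 (enum X) j) = (i == j).
Proof. by move=> iX jX; rewrite nth_uniq ?enum_uniq // -cardE. Qed.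

Lemma nthA (X : {set T}) x0 (i : 'I_#|X|) : nth x0 (enum X) i \in X.
Proof. exact: nth_in. Qed.

Lemma iso_R1 A s t (x0 : T) : R1 e A -> #|A| = s -> #|~: A| = t -> isomorphic e (Kbip s t).
Proof.
move=> HA sA tA; subst s t.
pose g (u : vert (Kbip #|A| #|~: A|)) : T :=
  match u with inl i => nth x0 (enum A) i | inr j => nth x0 (enum (~: A)) j end.
have gA u : (g u \in A) = (if u is inl _ then true else false).
  case: u => [i|j] /=; first exact: nthA.
  by apply/negbTE; rewrite -in_setC; apply: nthA.
apply: (@iso_of _ g).
- case=> [i|j] [i'|j'] /= E.
  + by congr inl; apply/ord_inj/eqP; rewrite -(nthE (X := A) x0) // E.
  + by have := gA (inl i); rewrite /= E (gA (inr j')).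
  + by have := gA (inr j); rewrite /= E (gA (inl i')).
  + by congr inr; apply/ord_inj/eqP; rewrite -(nthE (X := ~: A) x0) // E.
- by rewrite card_sum !card_ord cardsC.
- by move=> u v; rewrite HA !gA; case: u; case: v.
Qed.

Lemma iso_R2 A s t (x0 : T) : R2 e A -> #|A| = s -> #|~: A| = t ->
  isomorphic e (gjoin (Kn s) (Kbar t)).
Proof.
move=> HA sA tA; subst s t.
pose g (u : vert (gjoin (Kn #|A|) (Kbar #|~: A|))) : T :=
  match u with inl i => nth x0 (enum A) i | inr j => nth x0 (enum (~: A)) j end.
have gA u : (g u \in A) = (if u is inl _ then true else false).
  case: u => [i|j] /=; first exact: nthA.
  by apply/negbTE; rewrite -in_setC; apply: nthA.
have ginj : injective g.
  case=> [i|j] [i'|j'] /= E.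
  + by congr inl; apply/ord_inj/eqP; rewrite -(nthE (X := A) x0) // E.
  + by have := gA (inl i); rewrite /= E (gA (inr j')).
  + by have := gA (inr j); rewrite /= E (gA (inl i')).
  + by congr inr; apply/ord_inj/eqP; rewrite -(nthE (X := ~: A) x0) // E.
apply: (@iso_of _ g ginj).
- by rewrite card_sum !card_ord cardsC.
- move=> u v; rewrite HA !gA (inj_eq ginj).
  by case: u => [i|j]; case: v => [i'|j'] //=; rewrite ?andbT ?andbF //.
Qed.

Lemma cardB (A : {set T}) c : c \notin A -> #|Bset A c|.+1 = #|~: A|.
Proof.
move=> cA; rewrite (cardsD1 c (~: A)) inE cA add1n; congr (_.+1).
by apply: eq_card => v; rewrite inB !inE andbC.
Qed.

Lemma iso_R3 (A : {set T}) (c : T) s t (x0 : T) : c \notin A -> R3 e A c -> #|A| = s -> #|Bset A c| = t ->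
  isomorphic e (gjoin (Kn s) (gunion (Kn t) (Kn 1))).
Proof.
move=> cA HA sA tA; subst s t.
pose g (u : vert (gjoin (Kn #|A|) (gunion (Kn #|Bset A c|) (Kn 1)))) : T :=
  match u with inl i => nth x0 (enum A) i
  | inr (inl j) => nth x0 (enum (Bset A c)) j | inr (inr _) => c end.
have gA u : (g u \in A) = (if u is inl _ then true else false).
  case: u => [i|[j|k]] /=; first exact: nthA.
    by have := nthA x0 j; rewrite inB => /andP[/negbTE].
  exact/negbTE.
have gc u : (g u == c) = (if u is inr (inr _) then true else false).
  case: u => [i|[j|k]] /=; rewrite ?eqxx //.
    by apply/negbTE; apply: contraNneq cA => <-; apply: nthA.
  by have := nthA x0 j; rewrite inB => /andP[_ /negbTE].
have ginj : injective g.
  move=> u v E; have EA := gA u; rewrite E gA in EA.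
  have EC := gc u; rewrite E gc in EC.
  case: u v E EA EC => [i|[j|k]] [i'|[j'|k']] //= E _ _.
  + by congr inl; apply/ord_inj/eqP; rewrite -(nthE (X := A) x0) // E.
  + by congr inr; congr inl; apply/ord_inj/eqP; rewrite -(nthE (X := Bset A c) x0) // E.
  + by rewrite (ord1 k) (ord1 k').
apply: (@iso_of _ g ginj).
- by rewrite card_sum card_sum !card_ord -(cardsC A) -(cardB cA) addn1.
- move=> u v; rewrite HA (inj_eq ginj) !gA !gc.
  case: u => [i|[j|k]]; case: v => [i'|[j'|k']] //=; rewrite ?andbT ?andbF ?orbT ?orbF //.
  by rewrite (ord1 k) (ord1 k') eqxx.
Qed.

End Iso.

Section Targets.
Variables S1 S2 : finType.
Definition Lset : {set S1 + S2} := [set x | if x is inl _ then true else false].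
Lemma inL x : (x \in Lset) = (if x is inl _ then true else false).
Proof. by rewrite inE. Qed.
Lemma cardL : #|Lset| = #|S1|.
Proof.
have -> : Lset = inl @: [set: S1].
  apply/setP => -[x|y]; rewrite inL.
    by apply/esym/imsetP; exists x; rewrite ?inE.
  by apply/esym/imsetP => -[x _].
by rewrite card_imset ?cardsT // => x y [].
Qed.
Lemma cardLC : #|~: Lset| = #|S2|.
Proof. by have := cardsC Lset; rewrite cardL card_sum => /addnI. Qed.
End Targets.

Section Pull.
Variables (T : finType) (e : rel T).

Lemma pull (G : Defs.fgraph) : isomorphic e G ->
  exists f : T -> vert G, exists g, [/\ cancel f g, cancel g f & forall x y, adj (f x) (f y) = e x y].
Proof. by case=> f [[g fg gf] H]; exists f, g. Qed.

Lemma card_pre (T' : finType) (f : T -> T') g (X : {set T'}) :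
  cancel f g -> cancel g f -> #|f @^-1: X| = #|X|.
Proof.
move=> fg gf; have -> : f @^-1: X = g @: X.
  apply/setP => x; rewrite inE; apply/idP/imsetP => [fx|[y yX ->]]; last by rewrite gf.
  by exists (f x); rewrite ?fg.
by rewrite card_imset //; apply: can_inj gf.
Qed.

Lemma pull_Kbip s t : isomorphic e (Kbip s t) -> exists A, [/\ R1 e A, #|A| = s & #|~: A| = t].
Proof.
case/pull => f [g [fg gf H]]; exists (f @^-1: Lset 'I_s 'I_t); split.
- move=> x y; rewrite -H !inE; by case: (f x); case: (f y).
- by rewrite (card_pre _ fg gf) cardL card_ord.
- by rewrite -preimsetC (card_pre _ fg gf) cardLC card_ord.
Qed.

Lemma pull_R2 s t : isomorphic e (gjoin (Kn s) (Kbar t)) ->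
  exists A, [/\ R2 e A, #|A| = s & #|~: A| = t].
Proof.
case/pull => f [g [fg gf H]]; exists (f @^-1: Lset 'I_s 'I_t); split.
- move=> x y; rewrite -H !inE -(inj_eq (can_inj fg)).
  by case: (f x) => [i|j]; case: (f y) => [i'|j'] //=; rewrite ?andbT ?andbF.
- by rewrite (card_pre _ fg gf) cardL card_ord.
- by rewrite -preimsetC (card_pre _ fg gf) cardLC card_ord.
Qed.

Lemma pull_R3 s t : isomorphic e (gjoin (Kn s) (gunion (Kn t) (Kn 1))) ->
  exists (A : {set T}) (c : T), [/\ c \notin A, R3 e A c, #|A| = s & #|Bset A c| = t].
Proof.
case/pull => f [g [fg gf H]].
pose c' : 'I_s + ('I_t + 'I_1) := inr (inr ord0).
have fc x : (x == g c') = (f x == c').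
  by apply/eqP/eqP => [->|<-]; rewrite ?gf ?fg.
exists (f @^-1: Lset 'I_s ('I_t + 'I_1)%type), (g c'); split.
- by rewrite inE gf inL.
- move=> x y; rewrite -H !inE !fc -(inj_eq (can_inj fg)).
  case: (f x) => [i|[j|k]]; case: (f y) => [i'|[j'|k']] //=; rewrite ?andbT ?andbF //=;
  try (by rewrite /c' (ord1 k) eqxx); try (by rewrite /c' (ord1 k') eqxx).
  by rewrite /c' (ord1 k) (ord1 k') eqxx.
- by rewrite (card_pre _ fg gf) cardL card_ord.
- have cA : g c' \notin f @^-1: Lset 'I_s ('I_t + 'I_1)%type by rewrite inE gf inL.
  have := cardB cA; rewrite -preimsetC (card_pre _ fg gf) cardLC card_sum !card_ord addn1.
  by move/eqP; rewrite eqSS => /eqP.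
Qed.

End Pull.

Section Small.
Variables (T : finType) (e : rel T).

Lemma R3_R2 (A : {set T}) (c : T) : c \notin A -> R3 e A c -> #|Bset A c| <= 1 -> R2 e A.
Proof.
move=> cA H b1 u v; rewrite H.
case: (boolP (u == v)) => [/eqP->|uv] //.
rewrite /=.
case uA : (u \in A); case vA : (v \in A) => //=.
apply/negbTE/negP => /andP[uc vc].
have : [set u; v] \subset Bset A c.
  by apply/subsetP => w; rewrite inB in_set2 => /orP[]/eqP->; rewrite ?uA ?vA ?uc ?vc.
by move/subset_leq_card; rewrite cards2 uv => /leq_trans/(_ b1).
Qed.

Lemma R3_compl (A : {set T}) (c : T) : c \notin A -> R3 e A c -> #|Bset A c| = 0 -> forall u v, u != v -> e u v.
Proof.
move=> cA H b0 u v uv; rewrite H uv /=.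
case uA : (u \in A); case vA : (v \in A) => //=.
have : (u \notin Bset A c) && (v \notin Bset A c) by rewrite -!in_setC (cards0_eq b0) !inE.
rewrite !inB uA vA /= !negbK => /andP[/eqP uc /eqP vc].
by rewrite uc vc eqxx in uv.
Qed.

End Small.

Unset Implicit Arguments.

Theorem proposition2p4 (T : finType) (e : rel T) (l : nat) :
  symmetric e -> irreflexive e -> connected_graph e ->
  metric_dim e = #|T| - 2 -> 2 <= metric_dim e -> 1 <= l ->
  (dist_number e = #|T| - l <->
     (isomorphic e (Kbip l.+1 l.+1)) \/
     (exists t, l.+1 <= t /\ isomorphic e (Kbip t l)) \/
     (exists t, l <= t /\ isomorphic e (gjoin (Kn l) (Kbar t))) \/
     (exists t, l <= t /\ 2 <= l /\ isomorphic e (gjoin (Kn t) (Kbar l))) \/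
     (exists t, maxn 2 l.-1 <= t /\
        isomorphic e (gjoin (Kn l.-1) (gunion (Kn t) (Kn 1)))) \/
     (exists t, maxn 2 l.-1 <= t /\
        isomorphic e (gjoin (Kn t) (gunion (Kn l.-1) (Kn 1))))).
Proof.
move=> esy eirr econ edim edim2 l1.
have n4' := n4 edim edim2.
have NC' := NC eirr edim edim2.
have H3' := H3 eirr edim edim2.
have CN' := @CN _ _ esy eirr econ edim edim2.
split.
- move=> D.
  case: (classif esy eirr NC' H3' CN') => [[A [HA a0 b0]]|[[A [HA b2]]|[A [c [cA HA b2]]]]].
  + have nT := cardsC A.
    case/card_gt0P: (a0) => x0 _.
    move: D; rewrite (D_R1 esy eirr HA a0 b0).
    case: (ltngtP #|A| #|~: A|) => ab D.
    * right; left; exists #|~: A|; split; first by lia.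
      apply: (iso_R1 x0 (R1C HA)) => //; rewrite setCK; lia.
    * right; left; exists #|A|; split; first by lia.
      by apply: (iso_R1 x0 HA) => //; lia.
    * left; apply: (iso_R1 x0 HA); lia.
  + have nT := cardsC A.
    have [x0 _] : exists2 x0, x0 \in ~: A & true.
      by case/card_gt0P: (ltnW b2) => x0 ?; exists x0.
    move: D; rewrite (D_R2 esy eirr HA b2) => D.
    case: (leqP #|A| #|~: A|) => ab.
    * do 2 right; left; exists #|~: A|; split; first by lia.
      by apply: (iso_R2 x0 HA) => //; lia.
    * do 3 right; left; exists #|A|; split; first by lia.
      split; first by lia.
      by apply: (iso_R2 x0 HA) => //; lia.
  + have nT := cardsC A; have nB := cardB cA.
    move: D; rewrite (D_R3 esy eirr cA HA b2) => D.
    case: (leqP #|A| #|Bset A c|) => ab.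
    * do 4 right; left; exists #|Bset A c|; split; first by lia.
      by apply: (iso_R3 c cA HA) => //; lia.
    * do 5 right; exists #|A|; split; first by lia.
      by apply: (iso_R3 c cA HA) => //; lia.
- case=> [H|[[t [lt H]]|[[t [lt H]]|[[t [lt [l2 H]]]|[[t [lt H]]|[t [lt H]]]]]]].
  + case: (pull_Kbip H) => A [HA a b]; have nT := cardsC A.
    rewrite (D_R1 esy eirr HA) ?a ?b ?eqxx //; lia.
  + case: (pull_Kbip H) => A [HA a b]; have nT := cardsC A.
    rewrite (D_R1 esy eirr HA) ?a ?b; try lia.
    by rewrite ifN; [lia | apply/eqP; lia].
  + case: (pull_R2 H) => A [HA a b]; have nT := cardsC A.
    rewrite (D_R2 esy eirr HA); lia.
  + case: (pull_R2 H) => A [HA a b]; have nT := cardsC A.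
    rewrite (D_R2 esy eirr HA); lia.
  + case: (pull_R3 H) => A [c [cA HA a b]]; have nT := cardsC A; have nB := cardB cA.
    rewrite (D_R3 esy eirr cA HA); lia.
  + case: (pull_R3 H) => A [c [cA HA a b]]; have nT := cardsC A; have nB := cardB cA.
    case: (ltngtP 1 #|Bset A c|) => b1.
    * rewrite (D_R3 esy eirr cA HA); lia.
    * case: NC' => x [y [xy nxy]].
      have b0 : #|Bset A c| = 0 by lia.
      by rewrite (R3_compl cA HA b0 xy) in nxy.
    * have HA2 := R3_R2 cA HA (eq_leq (esym b1)).
      rewrite (D_R2 esy eirr HA2); lia.
Qed.
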